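(* Let $H$ be a Hilbert space and let $A$ be a densely defined closed linear operator in $H$ (not necessarily selfadjoint). Let $Q:=AA^*$, $B:=(I+Q)^{-1}$ (a selfadjoint operator with $0\le B\le I$), and let $F$ denote the closure of the operator $(I+Q)^{-1}A$, originally defined on $D(A)$; $F$ is a bounded linear operator defined on all of $H$ with $\|F\|\le \frac12$. Let $N^*:=\{u: A^*u=0\}$. Let $f\in D(A)$, and for $\delta>0$ let $f_\delta\in H$ satisfy $\|f_\delta-f\|\le\delta$. Let $y$ be the unique minimal-norm solution of $By=Ff$. Define the iterates $$v_{n+1}=(I-B)v_n+Ff_\delta,\qquad n=0,1,2,\dots,$$ with an initial element $v_0\perp N^*$. If $n=n(\delta)$ is an integer with $\lim_{\delta\to0}n(\delta)=\infty$ and $\lim_{\delta\to0}[\delta\, n(\delta)]=0$, then, with $v_\delta:=v_{n(\delta)}$, $$\lim_{\delta\to0}\|v_\delta-y\|=0.$$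
   Context: $I$ denotes the identity operator on $H$; inequalities $0\le B\le I$ are in the sense of quadratic forms. The relation $v=Af$ is equivalent to $Bv=Ff$, so the theorem gives a stable method of computing the value $Af$ of the unbounded operator $A$ from noisy data $f_\delta$ (which need not lie in $D(A)$). *)

(* Defs.v *)
From HB Require Import structures.
From mathcomp Require Import all_boot all_order all_algebra.
From mathcomp Require Import all_classical all_reals all_analysis.
Set Implicit Arguments. Unset Strict Implicit. Unset Printing Implicit Defensive.
Import Order.TTheory GRing.Theory Num.Theory.
Import numFieldNormedType.Exports.
Local Open Scope classical_set_scope.
Local Open Scope ring_scope.

Section Hilbert.
Variables (R : realType) (V : completeNormedModType R).

(* ip is an inner product on V inducing the norm of V, so that (V, ip) is a
   (real) Hilbert space: V is complete for this norm. *)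
Definition is_inner_product (ip : V -> V -> R) : Prop :=
  (forall x y, ip x y = ip y x) /\
  (forall (a : R) (x y z : V), ip (a *: x + y) z = a * ip x z + ip y z) /\
  (forall x, ip x x = `|x| ^+ 2).

Definition linear_operator (D : set V) (A : V -> V) : Prop :=
  D 0 /\
  (forall (a : R) x y, D x -> D y -> D (a *: x + y)) /\
  (forall (a : R) x y, D x -> D y -> A (a *: x + y) = a *: A x + A y).

Definition densely_defined (D : set V) : Prop := closure D = setT.

Definition graph (D : set V) (A : V -> V) : set (V * V) :=
  [set p | D p.1 /\ p.2 = A p.1].

Definition closed_operator (D : set V) (A : V -> V) : Prop :=
  closed (graph D A).

Variable ip : V -> V -> R.

Definition adj_rel (D : set V) (A : V -> V) (u w : V) : Prop :=
  forall x, D x -> ip (A x) u = ip x w.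
Definition adj_dom (D : set V) (A : V -> V) : set V :=
  [set u | exists w, adj_rel D A u w].
Definition adj (D : set V) (A : V -> V) (u : V) : V :=
  xget 0 [set w | adj_rel D A u w].

Definition Q_dom (D : set V) (A : V -> V) : set V :=
  [set u | adj_dom D A u /\ D (adj D A u)].
Definition Q_op (D : set V) (A : V -> V) (u : V) : V := A (adj D A u).

Definition B_op (D : set V) (A : V -> V) (h : V) : V :=
  xget 0 [set u | Q_dom D A u /\ u + Q_op D A u = h].

Definition op_closure (D : set V) (T : V -> V) (h : V) : V :=
  xget 0 [set w | closure (graph D T) (h, w)].

Definition F_op (D : set V) (A : V -> V) : V -> V :=
  op_closure D (fun x => B_op D A (A x)).

Definition Nstar (D : set V) (A : V -> V) : set V :=
  [set u | adj_dom D A u /\ adj D A u = 0].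

Definition iterates (D : set V) (A : V -> V) (v0 g : V) (k : nat) : V :=
  iter k (fun v => v - B_op D A v + F_op D A g) v0.

End Hilbert.

(* Main.v *)
Require Import Defs.
From HB Require Import structures.
From mathcomp Require Import all_boot all_order all_algebra.
From mathcomp Require Import all_classical all_reals all_analysis.
Import Order.TTheory GRing.Theory Num.Theory.
Import numFieldNormedType.Exports.
Local Open Scope classical_set_scope.
Local Open Scope ring_scope.
From mathcomp Require Import ring lra.
Section S.
Variables (R : realType) (V : completeNormedModType R).
Variable ip : V -> V -> R.
Hypothesis Hip : is_inner_product ip.

Lemma ipC x y : ip x y = ip y x.
Proof. by case: Hip. Qed.
Lemma ipL (a : R) x y z : ip (a *: x + y) z = a * ip x z + ip y z.
Proof. by case: Hip => _ []. Qed.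
Lemma ipN2 x : ip x x = `|x| ^+ 2.
Proof. by case: Hip => _ []. Qed.

Lemma ip0l z : ip 0 z = 0.
Proof.
have := ipL 1 0 0 z; rewrite scaler0 addr0 mul1r => H; lra.
Qed.
Lemma ipDl x y z : ip (x + y) z = ip x z + ip y z.
Proof. by rewrite -{1}(scale1r x) ipL mul1r. Qed.
Lemma ipZl a x z : ip (a *: x) z = a * ip x z.
Proof. by rewrite -(addr0 (a *: x)) ipL ip0l addr0. Qed.
Lemma ipNl x z : ip (- x) z = - ip x z.
Proof. by rewrite -scaleN1r ipZl mulN1r. Qed.
Lemma ipBl x y z : ip (x - y) z = ip x z - ip y z.
Proof. by rewrite ipDl ipNl. Qed.
Lemma ip0r z : ip z 0 = 0.
Proof. by rewrite ipC ip0l. Qed.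
Lemma ipDr x y z : ip z (x + y) = ip z x + ip z y.
Proof. by rewrite ipC ipDl !(ipC z). Qed.
Lemma ipZr a x z : ip z (a *: x) = a * ip z x.
Proof. by rewrite ipC ipZl ipC. Qed.
Lemma ipNr x z : ip z (- x) = - ip z x.
Proof. by rewrite ipC ipNl ipC. Qed.
Lemma ipBr x y z : ip z (x - y) = ip z x - ip z y.
Proof. by rewrite ipDr ipNr. Qed.

Lemma normD2 x y : `|x + y| ^+ 2 = `|x| ^+ 2 + 2 * ip x y + `|y| ^+ 2.
Proof.
rewrite -!ipN2 ipDl !ipDr (ipC y x); ring.
Qed.
Lemma normB2 x y : `|x - y| ^+ 2 = `|x| ^+ 2 - 2 * ip x y + `|y| ^+ 2.
Proof. by rewrite normD2 ipNr normrN; ring. Qed.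

Lemma ip_le x y : ip x y <= `|x| * `|y|.
Proof.
have := normB2 (`|y| *: x) (`|x| *: y).
rewrite !normrZ !ger0_norm // ipZl ipZr => E.
have H0 : 0 <= `|y| * `|x| * (`|x| * `|y| - ip x y).
  have := sqr_ge0 (Num.norm (`|y| *: x - `|x| *: y)).
  rewrite E; nra.
have [->|xn0] := eqVneq x 0; first by rewrite ip0l normr0 mul0r.
have [->|yn0] := eqVneq y 0; first by rewrite ip0r normr0 mulr0.
have hp : 0 < `|y| * `|x| by rewrite mulr_gt0 // normr_gt0.
by rewrite -subr_ge0; move: H0; rewrite pmulr_rge0.
Qed.

Lemma ip_abs x y : `|ip x y| <= `|x| * `|y|.
Proof.
rewrite ler_norml ip_le andbT.
by have := ip_le x (- y); rewrite ipNr normrN lerNl.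
Qed.

Variables (DA : set V) (A : V -> V).
Hypothesis HAlin : linear_operator DA A.
Hypothesis HAdense : densely_defined DA.
Hypothesis HAclosed : closed_operator DA A.

Lemma D0 : DA 0. Proof. by case: HAlin. Qed.
Lemma Dlin a x y : DA x -> DA y -> DA (a *: x + y).
Proof. by case: HAlin => _ [H _]; apply: H. Qed.
Lemma Alin a x y : DA x -> DA y -> A (a *: x + y) = a *: A x + A y.
Proof. by case: HAlin => _ [_ H]; apply: H. Qed.
Lemma DZ a x : DA x -> DA (a *: x).
Proof. by move=> Dx; rewrite -(addr0 (a *: x)); apply: Dlin => //; apply: D0. Qed.
Lemma DD x y : DA x -> DA y -> DA (x + y).
Proof. by move=> Dx Dy; rewrite -(scale1r x); apply: Dlin. Qed.
Lemma DB x y : DA x -> DA y -> DA (x - y).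
Proof. by move=> Dx Dy; rewrite addrC -scaleN1r; apply: Dlin. Qed.
Lemma A0 : A 0 = 0.
Proof.
have := @Alin 1 0 0 D0 D0; rewrite scaler0 addr0 scale1r => H.
by have := congr1 (fun t => t - A 0) H; rewrite subrr addrK.
Qed.
Lemma AZ a x : DA x -> A (a *: x) = a *: A x.
Proof. by move=> Dx; have := @Alin a x 0 Dx D0; rewrite !addr0 A0 addr0. Qed.
Lemma AD x y : DA x -> DA y -> A (x + y) = A x + A y.
Proof. by move=> Dx Dy; have := @Alin 1 x y Dx Dy; rewrite !scale1r. Qed.
Lemma AB x y : DA x -> DA y -> A (x - y) = A x - A y.
Proof. by move=> Dx Dy; have := @Alin (-1) y x Dy Dx; rewrite !scaleN1r addrC => ->; rewrite addrC. Qed.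

Lemma dense_orth w : (forall x, DA x -> ip x w = 0) -> w = 0.
Proof.
move=> Hw; apply/eqP; rewrite -normr_eq0; apply/eqP.
apply/eqP; rewrite eq_le normr_ge0 andbT; apply/negP => /negP.
rewrite -ltNge => wpos.
have : closure DA w by rewrite HAdense.
move=> /(_ (ball w `|w|) (nbhsx_ballx w _ wpos)) [x [Dx]].
rewrite -ball_normE /ball_ /= => Hx.
have E : `|w| ^+ 2 = ip (w - x) w by rewrite ipBl (Hw x Dx) subr0 ipN2.
have := ip_le (w - x) w; rewrite -E => H.
have : `|w - x| * `|w| < `|w| * `|w| by rewrite ltr_pM2r.
rewrite expr2 in H; lra.
Qed.

Lemma adj_unique {u w1 w2 : V} : adj_rel ip DA A u w1 -> adj_rel ip DA A u w2 -> w1 = w2.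
Proof.
move=> H1 H2; apply/eqP; rewrite -subr_eq0; apply/eqP; apply: dense_orth => x Dx.
by rewrite ipBr -H1 // -H2 // subrr.
Qed.
Lemma adjE {u w : V} : adj_rel ip DA A u w -> adj ip DA A u = w.
Proof. by move=> H; apply: xget_unique => // w' H'; apply: adj_unique H' H. Qed.
Lemma adjP u : adj_dom ip DA A u -> adj_rel ip DA A u (adj ip DA A u).
Proof. by move=> [w Hw]; rewrite (adjE Hw). Qed.

Lemma adj_rel_lin (a : R) {u1 u2 w1 w2 : V} : adj_rel ip DA A u1 w1 -> adj_rel ip DA A u2 w2 ->
  adj_rel ip DA A (a *: u1 + u2) (a *: w1 + w2).
Proof. by move=> H1 H2 x Dx; rewrite ipDr ipZr H1 // H2 // ipDr ipZr. Qed.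

Lemma core {u w : V} : adj_rel ip DA A u w -> DA w ->
  ip (u + A w) u = `|u| ^+ 2 + `|w| ^+ 2.
Proof. by move=> H Dw; rewrite ipDl H // !ipN2. Qed.


Lemma near_oo_ex (P : nat -> Prop) : (\forall k \near \oo, P k) ->
  exists N, forall k, (N <= k)%N -> P k.
Proof. by case=> N _ HN; exists N. Qed.

Lemma inv_small {e : R} : 0 < e -> exists N, forall k, (N <= k)%N -> (k.+1%:R)^-1 < e.
Proof.
move=> e0; have := near_infty_natSinv_lt (PosNum e0).
by move/near_oo_ex.
Qed.

Lemma complete_seq (u : nat -> V) :
  (forall e : R, 0 < e -> exists N, forall k, (N <= k)%N -> `|u N - u k| < e) ->
  exists z : V, u n @[n --> \oo] --> z.
Proof.
move=> Hc.
have : cauchy_ex (u @ \oo).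
  move=> e e0.
  have [N HN] := Hc e e0.
  exists (u N); exists N => // k Hk; rewrite /=.
  by rewrite -ball_normE /ball_ /=; apply: HN.
move=> /cauchy_exP /cauchy_cvg H.
by exists (lim (u @ \oo)).
Qed.

Lemma sqr_lt_norm (a : V) (e : R) : 0 < e -> `|a| ^+ 2 < e ^+ 2 -> `|a| < e.
Proof. move=> e0 H; have := normr_ge0 a; nra. Qed.

Lemma par (p q : V) : `|p - q| ^+ 2 = 2 * `|p| ^+ 2 + 2 * `|q| ^+ 2 - 4 * `|(2^-1 : R) *: (p + q)| ^+ 2.
Proof.
rewrite normrZ exprMn normB2 normD2 ger0_norm ?invr_ge0 //.
by field.
Qed.

Lemma quad0 (b c : R) : 0 <= b -> (forall t, 0 <= 2 * t * c + t ^+ 2 * b) -> c = 0.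
Proof.
move=> b0 H.
have s0 : 0 < (b + 1)^-1 by rewrite invr_gt0; lra.
set s := (b + 1)^-1 in s0.
have hs : s * (b + 1) = 1 by rewrite /s mulVf //; apply/eqP; lra.
have := H (- c * s).
move=> H1.
have H2 : 0 <= c ^+ 2 * s * (s * b - 2) by nra.
have H3 : s * b - 2 < 0 by nra.
have : c ^+ 2 * s <= 0 by nra.
move=> H4; have : c ^+ 2 <= 0 by nra.
move=> H5; apply/eqP; rewrite -sqrf_eq0; apply/eqP; have := sqr_ge0 c; lra.
Qed.


Lemma graph_lim (xs : nat -> V) (x z : V) : (forall k, DA (xs k)) ->
  xs k @[k --> \oo] --> x -> A (xs k) @[k --> \oo] --> z -> DA x /\ z = A x.
Proof.
move=> Dxs Hx Hz.
have Hp : (xs k, A (xs k)) @[k --> \oo] --> (x, z) by apply: cvg_pair.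
apply: (@closed_cvg _ _ \oo _ (fun k => (xs k, A (xs k))) (graph DA A) HAclosed _ (x, z) Hp).
by apply: nearW => k; rewrite /graph /=; split.
Qed.

Lemma B_exists h : exists u, Q_dom ip DA A u /\ u + Q_op ip DA A u = h.
Proof.
pose phi x := `|x| ^+ 2 + `|A x - h| ^+ 2.
pose S := phi @` DA.
pose m := inf S.
have Slb : has_lbound S.
  by exists 0 => _ [x _ <-]; rewrite /phi addr_ge0 // sqr_ge0.
have Sne : S !=set0 by exists (phi 0); exists 0 => //; apply: D0.
have mlb : forall x, DA x -> m <= phi x.
  by move=> x Dx; apply: (ge_inf Slb); exists x.
have Hseq : forall k : nat, exists x, DA x /\ phi x < m + (k.+1%:R)^-1.
  move=> k; have [_ [x Dx <-] Hx] := @inf_adherent _ S (k.+1%:R)^-1 (ltac:(by rewrite invr_gt0)) (conj Sne Slb).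
  by exists x.
have [xs Hxs] := choice Hseq.
have Hpar : forall k l, `|xs k - xs l| ^+ 2 + `|A (xs k) - A (xs l)| ^+ 2 <=
    2 * (k.+1%:R)^-1 + 2 * (l.+1%:R)^-1.
  move=> k l.
  have [Dk Hk] := Hxs k; have [Dl Hl] := Hxs l.
  pose c := (2^-1 : R) *: (xs k + xs l).
  have Dc : DA c by apply: DZ; apply: DD.
  have Ac : A c - h = (2^-1 : R) *: ((A (xs k) - h) + (A (xs l) - h)).
    rewrite AZ; last by apply: DD.
    rewrite AD // scalerDr !scalerDr !scalerN.
    have hh : (2^-1 : R) *: h + 2^-1 *: h = h.
      by rewrite -scalerDl (_ : 2^-1 + 2^-1 = 1 :> R) ?scale1r //; field.
    by rewrite -{1}hh [RHS]addrACA opprD.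
  have := mlb c Dc; rewrite /phi Ac.
  have E1 := par (xs k) (xs l).
  have E2 := par (A (xs k) - h) (A (xs l) - h).
  have -> : A (xs k) - A (xs l) = (A (xs k) - h) - (A (xs l) - h).
    by rewrite opprB addrA subrK.
  rewrite E1 E2 /c.
  move: Hk Hl; rewrite /phi => Hk Hl Hm.
  set a1 := `|xs k| ^+ 2 in Hk Hm *.
  set a2 := `|xs l| ^+ 2 in Hl Hm *.
  set a3 := `|A (xs k) - h| ^+ 2 in Hk Hm *.
  set a4 := `|A (xs l) - h| ^+ 2 in Hl Hm *.
  set a5 := `|(2^-1 : R) *: (xs k + xs l)| ^+ 2 in Hm *.
  set a6 := `|(2^-1 : R) *: (A (xs k) - h + (A (xs l) - h))| ^+ 2 in Hm *.
  set ik := (k.+1%:R^-1 : R) in Hk *.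
  set il := (l.+1%:R^-1 : R) in Hl *.
  clearbody m a1 a2 a3 a4 a5 a6 ik il.
  lra.
have Hcx : forall e : R, 0 < e -> exists N, forall k, (N <= k)%N ->
    `|xs N - xs k| < e /\ `|A (xs N) - A (xs k)| < e.
  move=> e e0.
  have e20 : 0 < e ^+ 2 / 4 by rewrite divr_gt0 // exprn_gt0.
  have [N HN] := inv_small e20.
  exists N => k Nk.
  have H1 := Hpar N k.
  have H2 := HN N (leqnn N).
  have H3 : (k.+1%:R)^-1 <= (N.+1%:R)^-1 :> R.
    by rewrite lef_pV2 ?posrE // ler_nat ltnS.
  have := sqr_ge0 `|xs N - xs k|; have := sqr_ge0 `|A (xs N) - A (xs k)|.
  move=> P1 P2.
  set ik := (k.+1%:R^-1 : R) in H1 H3 *.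
  set iN := (N.+1%:R^-1 : R) in H1 H2 H3 *.
  set e4 := e ^+ 2 / 4 in H2.
  have e4E : e ^+ 2 = 4 * e4 by rewrite /e4; field.
  clearbody ik iN e4.
  split; apply: sqr_lt_norm => //; rewrite e4E; lra.
have [x Hx] : exists x : V, xs k @[k --> \oo] --> x.
  by apply: complete_seq => e e0; have [N HN] := Hcx e e0; exists N => k /HN [].
have [z Hz] : exists z : V, A (xs k) @[k --> \oo] --> z.
  by apply: complete_seq => e e0; have [N HN] := Hcx e e0; exists N => k /HN [].
have [Dx zE] := @graph_lim xs x z (fun k => (Hxs k).1) Hx Hz.
subst z.
have phix : phi x <= m.
  have Hc : (fun k => phi (xs k)) @ \oo --> phi x.
    apply: cvgD; apply: cvgM; apply: cvg_norm => //; apply: cvgB => //; apply: cvg_cst.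
  apply/ler_addgt0Pr => e e0.
  have e20 : 0 < e / 2 by rewrite divr_gt0.
  have [N1 HN1] := near_oo_ex _ (cvgr_dist_lt _ _ Hc _ e20).
  have [N2 HN2] := inv_small e20.
  pose k := maxn N1 N2.
  have := HN1 k (leq_maxl _ _); have := HN2 k (leq_maxr _ _).
  have := (Hxs k).2.
  have := ler_norm (phi x - phi (xs k)).
  set ik := (k.+1%:R^-1 : R).
  set e2 := e / 2.
  have eE : e = 2 * e2 by rewrite /e2; field.
  rewrite eE.
  clearbody ik e2 m.
  lra.
have Hfo : forall xi, DA xi -> ip x xi + ip (A x - h) (A xi) = 0.
  move=> xi Dxi.
  apply: (@quad0 (`|xi| ^+ 2 + `|A xi| ^+ 2)); first by rewrite addr_ge0 // sqr_ge0.
  move=> t.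
  have D' : DA (t *: xi + x) by apply: Dlin.
  have := mlb _ D'.
  rewrite /phi Alin //.
  rewrite [t *: A xi + A x]addrC addrAC [t *: xi + x]addrC.
  move: phix; rewrite /phi => H1.
  set a := A x - h in H1 *.
  clearbody m a.
  rewrite !normD2 !normrZ !exprMn (real_normK (num_real t)) !ipZr => H2.
  nra.
have Hadj : adj_rel ip DA A (h - A x) x.
  move=> xi Dxi.
  have := Hfo xi Dxi.
  rewrite ipBr ipBl (ipC (A xi) h) (ipC (A xi) (A x)) (ipC xi x).
  lra.
exists (h - A x); split.
  by rewrite /Q_dom /=; split; [exists x | rewrite (adjE Hadj)].
by rewrite /Q_op (adjE Hadj) subrK.
Qed.


Notation Bop := (B_op ip DA A).
Notation W h := (adj ip DA A (Bop h)).

Lemma adj_relB {u1 u2 w1 w2 : V} : adj_rel ip DA A u1 w1 -> adj_rel ip DA A u2 w2 ->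
  adj_rel ip DA A (u1 - u2) (w1 - w2).
Proof. by move=> H1 H2 x Dx; rewrite !ipBr H1 // H2. Qed.

Lemma adj_rel0 : adj_rel ip DA A 0 0.
Proof. by move=> x Dx; rewrite !ip0r. Qed.

Lemma solve0 {u w : V} : adj_rel ip DA A u w -> DA w -> u + A w = 0 -> u = 0.
Proof.
move=> H Dw E; have := core H Dw; rewrite E ip0l => E2.
have := sqr_ge0 `|u|; have := sqr_ge0 `|w| => h1 h2.
have : `|u| ^+ 2 = 0 by lra.
by move/eqP; rewrite sqrf_eq0 normr_eq0 => /eqP.
Qed.

Lemma B_sol h : adj_rel ip DA A (Bop h) (W h) /\ DA (W h) /\ Bop h + A (W h) = h.
Proof.
have [[Hd Dw] E] : Q_dom ip DA A (Bop h) /\ Bop h + Q_op ip DA A (Bop h) = h.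
  by apply: (xgetPex 0 (B_exists h)).
by split; [apply: adjP | split].
Qed.

Lemma B_uniq {h u w : V} : adj_rel ip DA A u w -> DA w -> u + A w = h -> Bop h = u.
Proof.
move=> H Dw E; have [H' [Dw' E']] := B_sol h.
apply/eqP; rewrite -subr_eq0; apply/eqP.
apply: (solve0 (adj_relB H' H)); first by apply: DB.
by rewrite AB // addrACA -opprD E E' subrr.
Qed.

Lemma B_lin a h g : Bop (a *: h + g) = a *: Bop h + Bop g.
Proof.
have [H1 [D1 E1]] := B_sol h; have [H2 [D2 E2]] := B_sol g.
apply: (B_uniq (adj_rel_lin a H1 H2)); first by apply: Dlin.
by rewrite Alin // addrACA -scalerDr E1 E2.
Qed.

Lemma B_B h g : Bop (h - g) = Bop h - Bop g.
Proof. by rewrite addrC -scaleN1r B_lin scaleN1r addrC. Qed.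

Lemma B_ip h : ip (Bop h) h = `|Bop h| ^+ 2 + `|W h| ^+ 2.
Proof.
have [H [D E]] := B_sol h.
by rewrite ipC -(core H D) E.
Qed.

Lemma B_norm h : `|h| ^+ 2 = `|Bop h| ^+ 2 + 2 * `|W h| ^+ 2 + `|A (W h)| ^+ 2.
Proof.
have [H [D E]] := B_sol h.
by have := normD2 (Bop h) (A (W h)); rewrite E => ->; rewrite ipC H // ipN2.
Qed.

Lemma B_sym h g : ip (Bop h) g = ip h (Bop g).
Proof.
have [H1 [D1 E1]] := B_sol h; have [H2 [D2 E2]] := B_sol g.
have L : ip (Bop h) (Bop g + A (W g)) = ip (Bop h + A (W h)) (Bop g).
  by rewrite ipDr ipDl (ipC (Bop h) (A _)) H1 // H2 // (ipC (W g)).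
by rewrite E1 E2 in L.
Qed.

Lemma B_inj z : Bop z = 0 -> z = 0.
Proof.
move=> Hz; have [H [D E]] := B_sol z.
move: H D E; rewrite Hz => H D.
by rewrite (adj_unique H adj_rel0) A0 addr0 => <-.
Qed.

Definition Top h := h - Bop h.

Lemma T_lin a h g : Top (a *: h + g) = a *: Top h + Top g.
Proof.
rewrite /Top B_lin scalerBr opprD !addrA; congr (_ + _).
by rewrite addrAC.
Qed.
Lemma T_B h g : Top (h - g) = Top h - Top g.
Proof. by rewrite addrC -scaleN1r T_lin scaleN1r addrC. Qed.

Lemma T_sym h g : ip (Top h) g = ip h (Top g).
Proof. by rewrite /Top ipBl ipBr B_sym. Qed.

Lemma T_ip_ge0 h : 0 <= ip (Top h) h.
Proof.
rewrite /Top ipBl B_ip ipN2 B_norm.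
have := sqr_ge0 `|W h|; have := sqr_ge0 `|A (W h)|; lra.
Qed.

Lemma T_ip_le h : ip (Top h) h <= `|h| ^+ 2.
Proof.
rewrite /Top ipBl B_ip ipN2.
have := sqr_ge0 `|W h|; have := sqr_ge0 `|Bop h|; lra.
Qed.

Lemma T_norm2 h : `|Top h| ^+ 2 <= ip (Top h) h.
Proof.
rewrite /Top normB2 ipBl (ipC h) B_ip ipN2.
have := sqr_ge0 `|W h|; lra.
Qed.

Lemma T_norm h : `|Top h| <= `|h|.
Proof.
have := T_norm2 h; have := T_ip_le h => h1 h2.
have := normr_ge0 (Top h); have := normr_ge0 h; nra.
Qed.

Lemma T_fix z : Top z = z -> z = 0.
Proof.
rewrite /Top => /eqP; rewrite subr_eq addrC -subr_eq subrr eq_sym => /eqP.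
by apply: B_inj.
Qed.


Lemma Tpow_ip x i j : ip (iter i Top x) (iter j Top x) = ip (iter (i + j) Top x) x.
Proof.
elim: i j => [|i IH] j; first by rewrite add0n ipC.
by rewrite iterS T_sym -iterS IH addSnnS.
Qed.

Lemma nat_half k : exists m, k = (m + m)%N \/ k = (m.+1 + m)%N.
Proof.
elim: k => [|k [m [->|->]]]; first by exists 0%N; left.
  by exists m; right.
by exists m.+1; left; rewrite addSnnS.
Qed.

Lemma a_ge0 x k : 0 <= ip (iter k Top x) x.
Proof.
have [m [->|->]] := nat_half k; rewrite -Tpow_ip.
  by rewrite ipN2 sqr_ge0.
by rewrite iterS T_ip_ge0.
Qed.

Lemma a_decr x k : ip (iter k.+1 Top x) x <= ip (iter k Top x) x.
Proof.
have [m [->|->]] := nat_half k.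
  by rewrite -addSn -!Tpow_ip iterS ipN2 T_ip_le.
by rewrite -addnS -!Tpow_ip !iterS ipN2 T_norm2.
Qed.

Lemma a_mono x N d : ip (iter (N + d) Top x) x <= ip (iter N Top x) x.
Proof.
elim: d => [|d IH]; first by rewrite addn0.
by rewrite addnS; apply: le_trans (a_decr _ _) IH.
Qed.

Lemma Tpow_cvg x : iter k Top x @[k --> \oo] --> 0.
Proof.
pose a k := ip (iter k Top x) x.
pose S := range a.
have Slb : has_lbound S by exists 0 => _ [k _ <-]; apply: a_ge0.
have Sne : S !=set0 by exists (a 0%N); exists 0%N.
pose L := inf S.
have aL : forall k, L <= a k by move=> k; apply: (ge_inf Slb); exists k.
have Hn : forall n m, `|iter n Top x - iter m Top x| ^+ 2 = a (n + n)%N - 2 * a (n + m)%N + a (m + m)%N.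
  by move=> n m; rewrite normB2 -!ipN2 !Tpow_ip.
have [z Hz] : exists z : V, iter k Top x @[k --> \oo] --> z.
  apply: complete_seq => e e0.
  have e20 : 0 < e ^+ 2 / 2 by rewrite divr_gt0 // exprn_gt0.
  have [_ [N _ <-] HN] := @inf_adherent _ S (e ^+ 2 / 2) e20 (conj Sne Slb).
  exists N => k Nk.
  apply: sqr_lt_norm => //; rewrite Hn.
  have h1 : a (N + N)%N <= a N by apply: a_mono.
  have h2 : a (k + k)%N <= a N.
    by rewrite -(subnKC (leq_trans Nk (leq_addr k k))); apply: a_mono.
  have h3 := aL (N + k)%N.
  have eE : e ^+ 2 = 2 * (e ^+ 2 / 2) by field.
  rewrite eE; move: HN; rewrite -/L.
  set e2 := e ^+ 2 / 2; clearbody e2 L; lra.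
have Tz : Top z = z.
  apply/eqP; rewrite -subr_eq0 -normr_le0.
  apply/ler_addgt0Pr => e e0; rewrite add0r.
  have e20 : 0 < e / 2 by rewrite divr_gt0.
  have [N HN] := near_oo_ex _ (cvgr_dist_lt _ _ Hz _ e20).
  have h1 := HN N (leqnn N); have h2 := HN N.+1 (leqnSn N).
  have : `|Top z - z| <= `|Top (z - iter N Top x)| + `|z - iter N.+1 Top x|.
    have -> : Top z - z = Top (z - iter N Top x) - (z - iter N.+1 Top x).
      by rewrite T_B iterS; move: (Top z) (Top (iter N Top x)) => tz t; rewrite opprB addrA subrK.
    by apply: le_trans (ler_normB _ _) _.
  have := T_norm (z - iter N Top x).
  have eE : e = 2 * (e / 2) by field.
  rewrite eE; set e2 := e / 2 in h1 h2 *; clearbody e2; lra.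
by rewrite -(T_fix _ Tz).
Qed.


Notation Sop := (fun x => Bop (A x)).

Lemma S_bound x : DA x -> `|Bop (A x)| <= `|x|.
Proof.
move=> Dx /=; have [H [D E]] := B_sol (A x).
have h1 : ip (A x) (Bop (A x)) = `|Bop (A x)| ^+ 2 + `|W (A x)| ^+ 2.
  by rewrite -{1}E core.
rewrite H // in h1.
have h2 := ip_le x (W (A x)).
have := normr_ge0 x; have := normr_ge0 (Bop (A x)); have := normr_ge0 (W (A x)).
move: h1 h2; set u := Bop (A x); set w := W (A x); clearbody u w => h1 h2 p1 p2 p3.
rewrite h1 in h2.
have h3 := sqr_ge0 (`|x| - `|w|).
have h4 : 0 <= `|x| * `|w| by rewrite mulr_ge0.
have hu2 : `|u| ^+ 2 <= `|x| ^+ 2 by nra.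
nra.
Qed.

Lemma S_lip f g : DA f -> DA g -> `|Bop (A f) - Bop (A g)| <= `|f - g|.
Proof. by move=> Df Dg; rewrite -B_B -AB //; apply: S_bound; apply: DB. Qed.

Lemma F_close g w f : DA f -> closure (graph DA Sop) (g, w) -> `|w - Sop f| <= `|g - f|.
Proof.
move=> Df Hc; apply/ler_addgt0Pr => e e0.
have e20 : 0 < e / 2 by rewrite divr_gt0.
have [[p q] [[/= Dp ->] [/= Hb1 Hb2]]] := Hc _ (nbhsx_ballx (g, w) _ e20).
move: Hb1 Hb2; rewrite -!ball_normE /ball_ /= => Hb1 Hb2.
have h1 := @S_lip p f Dp Df.
have h2 : `|w - Bop (A f)| <= `|w - Bop (A p)| + `|Bop (A p) - Bop (A f)|.
  have -> : w - Bop (A f) = (w - Bop (A p)) + (Bop (A p) - Bop (A f)) by rewrite addrA subrK.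
  exact: ler_normD.
have h3 : `|p - f| <= `|p - g| + `|g - f|.
  have -> : p - f = (p - g) + (g - f) by rewrite addrA subrK.
  exact: ler_normD.
have h4 : `|p - g| = `|g - p| by rewrite -opprB normrN.
have eE : e = 2 * (e / 2) by field.
rewrite eE; move: Hb1 Hb2 h1 h2 h3 h4 => /=.
set e2 := e / 2; clearbody e2 => *; lra.
Qed.


Lemma ik_le (N k : nat) : (N <= k)%N -> (k.+1%:R^-1 : R) <= N.+1%:R^-1.
Proof. by move=> Nk; rewrite lef_pV2 ?posrE // ler_nat ltnS. Qed.

Lemma F_exists g : exists w, closure (graph DA Sop) (g, w).
Proof.
have Hseq : forall k : nat, exists x, DA x /\ `|g - x| < (k.+1%:R)^-1.
  move=> k; have : closure DA g by rewrite HAdense.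
  have kp : 0 < (k.+1%:R : R)^-1 by rewrite invr_gt0.
  move=> /(_ _ (nbhsx_ballx g _ kp)) [x [Dx Hb]]; exists x; split => //.
  by move: Hb; rewrite -ball_normE.
have [xs Hxs] := choice Hseq.
have [w Hw] : exists w : V, Bop (A (xs k)) @[k --> \oo] --> w.
  apply: complete_seq => e e0.
  have e20 : 0 < e / 2 by rewrite divr_gt0.
  have [N HN] := inv_small e20.
  exists N => k Nk.
  have h1 := @S_lip (xs N) (xs k) (Hxs N).1 (Hxs k).1.
  have h2 : `|xs N - xs k| <= `|g - xs N| + `|g - xs k|.
    have -> : xs N - xs k = - (g - xs N) + (g - xs k) by rewrite opprB addrA subrK.
    by apply: le_trans (ler_normD _ _) _; rewrite normrN.
  have h3 := (Hxs N).2; have h4 := (Hxs k).2; have h5 := ik_le _ _ Nk.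
  have h6 := HN N (leqnn N).
  have eE : e = 2 * (e / 2) by field.
  rewrite eE; move: h1 h2 h3 h4 h5 h6.
  set e2 := e / 2; set iN := (N.+1%:R^-1 : R); set ik := (k.+1%:R^-1 : R).
  clearbody e2 iN ik => *; lra.
have Hx : xs k @[k --> \oo] --> g.
  apply/cvgrPdist_lt => e e0; have [N HN] := inv_small e0.
  exists N => // k Nk /=.
  by apply: lt_le_trans (Hxs k).2 _; apply: le_trans (ik_le _ _ Nk) _; apply/ltW/HN.
have Hp : (xs k, Bop (A (xs k))) @[k --> \oo] --> (g, w) by apply: cvg_pair.
exists w.
have Hn : \forall k \near \oo, closure (graph DA Sop) (xs k, Bop (A (xs k))).
  by apply: nearW => k; apply: subset_closure; rewrite /graph /=; split => //; apply: (Hxs k).1.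
exact: (@closed_cvg _ _ \oo _ (fun k => (xs k, Bop (A (xs k)))) (closure (graph DA Sop)) (@closed_closure _ (graph DA Sop)) Hn (g, w) Hp).
Qed.

Lemma F_lip g f : DA f -> `|F_op ip DA A g - F_op ip DA A f| <= `|g - f|.
Proof.
move=> Df.
have Ff : F_op ip DA A f = Bop (A f).
  apply: xget_unique; first by apply: subset_closure; rewrite /graph /=; split.
  move=> w Hw; have := @F_close f w f Df Hw; rewrite subrr normr0 normr_le0 subr_eq0.
  by move/eqP.
rewrite Ff; apply: (@F_close g _ f Df).
by apply: (xgetPex 0 (F_exists g)).
Qed.


Lemma zid (v bv fg y b : V) : v - bv + fg - y = (v - y) - (bv - b) + (fg - b).
Proof.
rewrite opprB -[in RHS]addrA [b - bv]addrC [(- bv + b) + _]addrACA subrr addr0 addrA.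
by rewrite [LHS]addrAC [v - bv - y]addrAC.
Qed.

Lemma iter_bound v0 g f y : DA f -> Bop y = F_op ip DA A f ->
  forall k, `|iterates ip DA A v0 g k - y - iter k Top (v0 - y)| <= k%:R * `|g - f|.
Proof.
move=> Df Hy; elim=> [|k IH].
  by rewrite /iterates /= subrr normr0 mul0r.
have -> : iterates ip DA A v0 g k.+1 =
   iterates ip DA A v0 g k - Bop (iterates ip DA A v0 g k) + F_op ip DA A g by [].
rewrite iterS.
move: IH; set v := iterates ip DA A v0 g k; set t := iter k Top (v0 - y) => IH.
have E : v - Bop v + F_op ip DA A g - y - Top t =
    Top (v - y - t) + (F_op ip DA A g - F_op ip DA A f).
  by rewrite (zid v (Bop v) (F_op ip DA A g) y (Bop y)) -B_B -/(Top (v - y)) addrAC -T_B Hy.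
rewrite E; apply: le_trans (ler_normD _ _) _.
have h1 := T_norm (v - y - t).
have h2 := F_lip g f Df.
rewrite -addn1 natrD mulrDl mul1r.
apply: lerD => //; apply: le_trans h1 IH.
Qed.


Lemma main (f : V) (Hf : DA f) (fd : R -> V)
  (Hfd : forall d : R, 0 < d -> `|fd d - f| <= d)
  (y : V) (Hy : B_op ip DA A y = F_op ip DA A f)
  (v0 : V) (n : R -> nat)
  (Hn : n @ 0^'+ --> \oo)
  (Hdn : (fun d : R => d * (n d)%:R) @ 0^'+ --> (0 : R)) :
  (fun d : R => `|iterates ip DA A v0 (fd d) (n d) - y|) @ 0^'+ --> (0 : R).
Proof.
pose x := v0 - y.
have Hc : (fun d => iter (n d) Top x) @ 0^'+ --> (0 : V).
  exact: (cvg_comp n (fun k => iter k Top x) Hn (Tpow_cvg x)).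
apply/cvgrPdist_lt => e e0.
have e20 : 0 < e / 2 by rewrite divr_gt0.
near=> d.
have dpos : 0 < d by near: d; apply: nbhs_right_gt.
have h1 : `|0 - iter (n d) Top x| < e / 2.
  by near: d; apply: (cvgr_dist_lt _ _ Hc _ e20).
have h2 : `|0 - d * (n d)%:R| < e / 2.
  by near: d; apply: (cvgr_dist_lt _ _ Hdn _ e20).
have h3 := iter_bound v0 (fd d) f y Hf Hy (n d).
have h4 := Hfd d dpos.
rewrite sub0r normrN in h1 h2; rewrite sub0r normrN normr_id.
have h5 : `|iterates ip DA A v0 (fd d) (n d) - y| <=
    `|iterates ip DA A v0 (fd d) (n d) - y - iter (n d) Top x| + `|iter (n d) Top x|.
  set q := iterates ip DA A v0 (fd d) (n d) - y.
  set r := iter (n d) Top x.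
  by rewrite -{1}(subrK r q) ler_normD.
have h6 : (n d)%:R * `|fd d - f| <= (n d)%:R * d by apply: ler_wpM2l.
have hge : 0 <= d * (n d)%:R by rewrite mulr_ge0 // ltW.
rewrite sub0r normrN (ger0_norm hge) in h2.
have eE : e = 2 * (e / 2) by field.
rewrite eE; move: h1 h2 h3 h5 h6; rewrite -/x (mulrC d).
set e2 := e / 2; clearbody e2 => *; lra.
Unshelve. all: by end_near.
Qed.

End S.

Theorem theorem2 (R : realType) (V : completeNormedModType R)
  (ip : V -> V -> R) (Hip : is_inner_product ip)
  (DA : set V) (A : V -> V)
  (HAlin : linear_operator DA A) (HAdense : densely_defined DA)
  (HAclosed : closed_operator DA A)
  (f : V) (Hf : DA f) (fd : R -> V)
  (Hfd : forall d : R, 0 < d -> `|fd d - f| <= d)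
  (y : V) (Hy : B_op ip DA A y = F_op ip DA A f)
  (Hymin : forall z, B_op ip DA A z = F_op ip DA A f -> `|y| <= `|z|)
  (v0 : V) (Hv0 : forall u, Nstar ip DA A u -> ip v0 u = 0)
  (n : R -> nat)
  (Hn : n @ 0^'+ --> \oo)
  (Hdn : (fun d : R => d * (n d)%:R) @ 0^'+ --> (0 : R)) :
  (fun d : R => `|iterates ip DA A v0 (fd d) (n d) - y|) @ 0^'+ --> (0 : R).
Proof.
exact: (@main R V ip Hip DA A HAlin HAdense HAclosed f Hf fd Hfd y Hy v0 n Hn Hdn).
Qed.
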